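(* Let $b>1$ and suppose $P$ satisfies $(1/2,b)$-multiplicative-expansion on $\mathcal{X}$. Suppose moreover that the following implication (constant-expansion guarantee) holds for classifiers $G$: whenever $P$ satisfies $(c,\rho)$-constant-expansion for some $c$, $\mathcal{R}_{\mathcal{A}}(G)<\rho$, and $\min_i P(\{x: G(x)=i\})>2\max\{c,\mathcal{R}_{\mathcal{A}}(G)\}$, there is a permutation $\pi:[K]\to[K]$ with $P(\{x:\pi(G(x))\neq G^*(x)\})\le \max\{c,\mathcal{R}_{\mathcal{A}}(G)\}+\mathcal{R}_{\mathcal{A}}(G)$. If a classifier $G:\mathcal{X}\to[K]$ satisfies $$\min_{i\in[K]}\mathbb{E}_P[\mathbf{1}(G(x)=i)]>\max\left\{\tfrac{2}{b-1},2\right\}\mathcal{R}_{\mathcal{A}}(G),$$ then $\mathrm{Err}_{\mathrm{unsup}}(G)\le\max\left\{\tfrac{b}{b-1},2\right\}\mathcal{R}_{\mathcal{A}}(G)$.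
   Context: $P$ is a distribution on $\mathcal{X}$ with ground-truth labelling $G^*:\mathcal{X}\to[K]$, $\mathcal{Q}_i:=\{x:G^*(x)=i\}$, $P_i(S)=P(S\cap\mathcal{Q}_i)/P(\mathcal{Q}_i)$. With augmentation maps $\mathcal{T}_{wa}$ and radius $r$: $\mathcal{A}(x):=\{x':\exists T\in\mathcal{T}_{wa},\ \|x'-T(x)\|\le r\}$, $\mathcal{N}(x):=\{x':\mathcal{A}(x)\cap\mathcal{A}(x')\neq\emptyset\}$, $\mathcal{N}(S):=\bigcup_{x\in S}\mathcal{N}(x)$, $\mathcal{N}^*(S):=\bigcup_{i}(\mathcal{N}(S\cap\mathcal{Q}_i)\cap\mathcal{Q}_i)$. $(a,b)$-multiplicative-expansion: for every $i$ and $S\subseteq\mathcal{Q}_i$ with $P_i(S)\le a$, $P_i(\mathcal{N}(S))\ge\min\{bP_i(S),1\}$. $(c,\rho)$-constant-expansion: for every $S$ with $P(S)\ge c$ and $P(S\cap\mathcal{Q}_i)\le P(\mathcal{Q}_i)/2$ for all $i$, $P(\mathcal{N}^*(S)\setminus S)\ge\min\{\rho,P(S)\}$. Consistency regularization loss: $\mathcal{R}_{\mathcal{A}}(G):=\mathbb{E}_{x\sim P}[\mathbf{1}(\exists x'\in\mathcal{A}(x)\text{ with }G(x')\neq G(x))]$. Unsupervised error: $\mathrm{Err}_{\mathrm{unsup}}(G):=\min_{\pi}P(\{x:\pi(G(x))\neq G^*(x)\})$, minimum over permutations $\pi$ of $[K]$. *)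

(* Defs.v *)
From HB Require Import structures.
From mathcomp Require Import all_boot all_order all_algebra fingroup perm.
From mathcomp Require Import all_classical all_reals all_analysis.
Set Implicit Arguments. Unset Strict Implicit. Unset Printing Implicit Defensive.
Import Order.TTheory GRing.Theory Num.Theory numFieldNormedType.Exports.
Local Open Scope classical_set_scope.
Local Open Scope ring_scope.

Section Expansion.
Variable R : realType.
Variable X : normedModType R.
Variable mX : set (set X).
Notation XT := (g_sigma_algebraType mX).
Variable P : probability XT R.
Variable K : nat.
Variable Gstar : X -> 'I_K.
Variable Twa : set (X -> X).
Variable r : R.

Definition Pr (S : set XT) : R := fine (P S).

Definition Qcl (i : 'I_K) : set XT := Gstar @^-1` [set i].

Definition Pcl (i : 'I_K) (S : set XT) : R := Pr (S `&` Qcl i) / Pr (Qcl i).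

Definition Aug (x : X) : set X :=
  [set x' | exists T, Twa T /\ `|x' - T x| <= r].

Definition Nbr (x : X) : set X := [set x' | Aug x `&` Aug x' !=set0].

Definition NbrS (S : set X) : set X := \bigcup_(x in S) Nbr x.

Definition NbrStar (S : set X) : set X :=
  \bigcup_(i in [set: 'I_K]) (NbrS (S `&` Qcl i) `&` Qcl i).

Definition mult_expansion (a b : R) : Prop :=
  forall (i : 'I_K) (S : set XT), measurable S -> S `<=` Qcl i ->
    Pcl i S <= a -> Pcl i (NbrS S) >= Num.min (b * Pcl i S) 1.

Definition const_expansion (c rho : R) : Prop :=
  forall S : set XT, measurable S -> Pr S >= c ->
    (forall i : 'I_K, Pr (S `&` Qcl i) <= Pr (Qcl i) / 2) ->
    Pr (NbrStar S `\` S) >= Num.min rho (Pr S).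

Definition inconsistent (G : X -> 'I_K) : set X :=
  [set x | exists x', Aug x x' /\ G x' <> G x].

Definition RA (G : X -> 'I_K) : R := Pr (inconsistent G).

Definition classifier_meas (G : X -> 'I_K) : Prop :=
  (forall i : 'I_K, measurable (G @^-1` [set i] : set XT)) /\
  measurable (inconsistent G : set XT).

Definition min_class_mass (G : X -> 'I_K) : R :=
  \big[Num.min/1]_(i < K) Pr (G @^-1` [set i]).

Definition perm_err (G : X -> 'I_K) (pi : {perm 'I_K}) : R :=
  Pr [set x | pi (G x) <> Gstar x].

Definition Err_unsup (G : X -> 'I_K) : R :=
  \big[Num.min/1]_(pi : {perm 'I_K}) perm_err G pi.

End Expansion.

(* Main.v *)
Require Import Defs.
From HB Require Import structures.
From mathcomp Require Import all_boot all_order all_algebra fingroup perm.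
From mathcomp Require Import all_classical all_reals all_analysis.
From mathcomp Require Import ring lra.
Import Order.TTheory GRing.Theory Num.Theory numFieldNormedType.Exports.
Local Open Scope classical_set_scope.
Local Open Scope ring_scope.

Lemma in_bigsetU (T : Type) (I : eqType) (s : seq I) (F : I -> set T) x :
  (\big[setU/set0]_(i <- s) F i) x <-> exists i, i \in s /\ F i x.
Proof.
elim: s => [|a s IH]; first by rewrite big_nil; split => // -[i []].
rewrite big_cons; split.
- case=> [Fa|/IH [i [si Fi]]]; first by exists a; rewrite mem_head.
  by exists i; rewrite in_cons si orbT.
- move=> [i []]; rewrite in_cons => /orP [/eqP ->|si Fi]; first by left.
  by right; apply/IH; exists i.
Qed.

Lemma in_bigsetU_ord (T : Type) n (F : 'I_n -> set T) x :
  (\big[setU/set0]_(i < n) F i) x <-> exists i, F i x.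
Proof.
rewrite in_bigsetU; split; first by move=> [i [_ ?]]; exists i.
by move=> [i ?]; exists i; rewrite mem_index_enum.
Qed.

Lemma bigmin1_le (R : realType) (I : eqType) (s : seq I) (f : I -> R) j :
  j \in s -> \big[Num.min/1]_(i <- s) f i <= f j.
Proof.
elim: s => [//|a s IH]; rewrite in_cons big_cons ge_min => /orP [/eqP ->|/IH ->].
  by rewrite lexx.
by rewrite orbT.
Qed.

Section H.
Variables (R : realType) (X : normedModType R) (mX : set (set X)).
Variable (P : probability (g_sigma_algebraType mX) R).
Notation XT := (g_sigma_algebraType mX).

Lemma PrE (A : set XT) : measurable A -> (Pr P A)%:E = P A.
Proof. by move=> mA; rewrite /Pr fineK // fin_num_measure. Qed.

Lemma Pr_ge0 (A : set XT) : 0 <= Pr P A.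
Proof. by rewrite /Pr fine_ge0. Qed.

Lemma Pr_le (A B : set XT) : measurable A -> measurable B -> A `<=` B ->
  Pr P A <= Pr P B.
Proof. by move=> mA mB AB; rewrite -lee_fin !PrE // le_measure // inE. Qed.

Lemma Pr_sub2 (A U V : set XT) : measurable A -> measurable U -> measurable V ->
  A `<=` U `|` V -> Pr P A <= Pr P U + Pr P V.
Proof.
move=> mA mU mV AUV; rewrite -lee_fin EFinD !PrE //.
apply: le_trans (measureU2 _ mU mV).
by rewrite le_measure // inE //; apply: measurableU.
Qed.

Lemma Pr_sum n (F : 'I_n -> set XT) : (forall i, measurable (F i)) ->
  trivIset setT F ->
  Pr P (\big[setU/set0]_(i < n) F i) = \sum_(i < n) Pr P (F i).
Proof.
move=> mF tF; apply: EFin_inj; rewrite PrE; last first.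
  by apply: bigsetU_measurable => i _; apply: mF.
rewrite -sumEFin (measure_bigsetU_ord P xpredT mF tF).
by apply: eq_bigr => i _; rewrite PrE.
Qed.
End H.
Lemma const_of_mult (R : realType) (X : normedModType R) (mX : set (set X))
  (P : probability (g_sigma_algebraType mX) R) (K : nat) (Gstar : X -> 'I_K)
  (Twa : set (X -> X)) (r : R) (b : R)
  (HQ : forall i : 'I_K, measurable (Qcl (mX:=mX) Gstar i))
  (HN : forall S : set (g_sigma_algebraType mX),
      measurable S -> measurable (NbrS Twa r S : set (g_sigma_algebraType mX)))
  (Hb : 1 < b)
  (Hmult : mult_expansion P Gstar Twa r (1 / 2) b) (c rho : R) :
  rho <= Num.min (b - 1) 1 * c -> const_expansion P Gstar Twa r c rho.
Proof.
set k := Num.min (b - 1) 1 => rhoc S mS PSc Hhalf.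
have k0 : 0 < k by rewrite lt_min subr_gt0 Hb ltr01.
have kb : k <= b - 1 by rewrite ge_min lexx.
have k1 : k <= 1 by rewrite ge_min lexx orbT.
pose Si i := S `&` Qcl (mX:=mX) Gstar i.
pose Ai i : set (g_sigma_algebraType mX) := (NbrS Twa r (Si i) `&` Qcl (mX:=mX) Gstar i) `\` S.
have mSi i : measurable (Si i) by apply: measurableI.
have mNi i : measurable (NbrS Twa r (Si i) `&` Qcl (mX:=mX) Gstar i : set (g_sigma_algebraType mX)).
  by apply: measurableI => //; apply: HN.
have mAi i : measurable (Ai i) by apply: measurableD.
have triv (F : 'I_K -> set (g_sigma_algebraType mX)) :
    (forall i, F i `<=` Qcl (mX:=mX) Gstar i) -> trivIset setT F.
  move=> FQ i j _ _ [x [/FQ xi /FQ xj]].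
  by rewrite /Qcl /= in xi xj; rewrite -xi -xj.
have eq1 : NbrStar mX Gstar Twa r S `\` S = \big[setU/set0]_(i < K) Ai i.
  apply/seteqP; split=> x.
    move=> [[i _ Hi] nS]; apply/in_bigsetU_ord; by exists i.
  move/in_bigsetU_ord=> [i [Hi nS]]; split => //; by exists i.
have eq2 : S = \big[setU/set0]_(i < K) Si i.
  apply/seteqP; split=> x.
    by move=> Sx; apply/in_bigsetU_ord; exists (Gstar x); split.
  by move/in_bigsetU_ord=> [i []].
have per i : k * Pr P (Si i) <= Pr P (Ai i).
  set q := Pr P (Qcl (mX:=mX) Gstar i).
  set s := Pr P (Si i).
  set nq := Pr P (NbrS Twa r (Si i) `&` Qcl (mX:=mX) Gstar i).
  have s0 : 0 <= s by apply: Pr_ge0.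
  have sq : s <= q / 2 by apply: Hhalf.
  have A0 : 0 <= Pr P (Ai i) by apply: Pr_ge0.
  have Anq : nq <= Pr P (Ai i) + s.
    apply: Pr_sub2 => // x [Nx Qx]; have [Sx|nSx] := pselect (S x).
      by right.
    by left.
  have [q0|qn0] := eqVneq q 0.
    have -> : s = 0 by apply/le_anti; rewrite s0 andbT; rewrite q0 mul0r in sq.
    by rewrite mulr0.
  have qp : 0 < q by rewrite lt_def qn0 Pr_ge0.
  have H := Hmult i (Si i) (mSi i) (@subIsetr _ _ _).
  rewrite /Pcl in H.
  have Si_eq : Si i `&` Qcl (mX:=mX) Gstar i = Si i by rewrite /Si -setIA setIid.
  rewrite Si_eq -/s -/q -/nq in H.
  have sq2 : s / q <= 1 / 2 by rewrite ler_pdivrMr //; lra.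
  move: (H sq2); rewrite ge_min => /orP [Hm|Hm].
    have : b * s <= nq.
      by move: Hm; rewrite ler_pdivlMr // -mulrA divfK.
    nra.
  have : q <= nq by move: Hm; rewrite ler_pdivlMr // mul1r.
  nra.
rewrite eq1 Pr_sum //; last by apply: triv => i x [[]].
apply: le_trans (_ : k * Pr P S <= _).
  rewrite ge_min; apply/orP; left; apply: le_trans rhoc _.
  by rewrite ler_pM2l.
rewrite {1}eq2 Pr_sum //; last by apply: triv => i x [].
by rewrite mulr_sumr; apply: ler_sum => i _; apply: per.
Qed.
Theorem lemma2 (R : realType) (X : normedModType R) (mX : set (set X))
  (P : probability (g_sigma_algebraType mX) R) (K : nat) (Gstar : X -> 'I_K)
  (Twa : set (X -> X)) (r : R) (b : R)
  (* standing measurability assumptions *)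
  (HQ : forall i : 'I_K, measurable (Qcl (mX:=mX) Gstar i))
  (HN : forall S : set (g_sigma_algebraType mX),
      measurable S -> measurable (NbrS Twa r S : set (g_sigma_algebraType mX)))
  (Hb : 1 < b)
  (Hmult : mult_expansion P Gstar Twa r (1 / 2) b)
  (Hguar : forall (G : X -> 'I_K) (c rho : R),
      classifier_meas mX Twa r G ->
      const_expansion P Gstar Twa r c rho ->
      RA P Twa r G < rho ->
      min_class_mass P G > 2 * Num.max c (RA P Twa r G) ->
      exists pi : {perm 'I_K},
        perm_err P Gstar G pi <= Num.max c (RA P Twa r G) + RA P Twa r G)
  (G : X -> 'I_K) (HG : classifier_meas mX Twa r G)
  (Hmin : min_class_mass P G > Num.max (2 / (b - 1)) 2 * RA P Twa r G) :
  Err_unsup P Gstar G <= Num.max (b / (b - 1)) 2 * RA P Twa r G.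
Proof.
set R0 := RA P Twa r G in Hguar Hmin *.
set m := min_class_mass P G in Hguar Hmin *.
have R00 : 0 <= R0 by apply: Pr_ge0.
set k := Num.min (b - 1) 1.
have k0 : 0 < k by rewrite lt_min subr_gt0 Hb ltr01.
have k1 : k <= 1 by rewrite ge_min lexx orbT.
have b10 : 0 < b - 1 by rewrite subr_gt0.
have [E1 E2] : Num.max (2 / (b - 1)) 2 = 2 / k /\
               Num.max (b / (b - 1)) 2 = 1 + 1 / k.
  rewrite /k; have [bl|bg] := leP (b - 1) 1.
    rewrite max_l; last by rewrite ler_pdivlMr //; lra.
    rewrite max_l; last by rewrite ler_pdivlMr //; lra.
    by split => //; field; apply/lt0r_neq0.
  rewrite max_r; last by rewrite ler_pdivrMr //; lra.
  rewrite max_r; last by rewrite ler_pdivrMr //; lra.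
  by split => //; lra.
rewrite E1 in Hmin; rewrite E2.
set d := m * k / 2 - R0.
have H1 : 2 * R0 < m * k.
  have -> : 2 * R0 = (2 / k * R0) * k by field; exact: lt0r_neq0.
  by rewrite ltr_pM2r.
have d0 : 0 < d by rewrite /d; lra.
apply/ler_addgt0Pr => e e0.
set eps := Num.min (e * k) (d / 2).
have eps0 : 0 < eps by rewrite lt_min mulr_gt0 // divr_gt0.
have epsk : eps <= e * k by rewrite ge_min lexx.
have epsd : eps <= d / 2 by rewrite ge_min lexx orbT.
set rho := R0 + eps.
set c := rho / k.
have rho0 : 0 <= rho by rewrite /rho; lra.
have crho : rho <= c by rewrite /c ler_pdivlMr //; nra.
have Hce : const_expansion P Gstar Twa r c rho.
  have := @const_of_mult _ _ _ _ _ _ _ _ _ HQ HN Hb Hmult c rho; apply; rewrite -/k /c mulrC divfK //; exact: lt0r_neq0.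
have mc : Num.max c R0 = c by rewrite max_l //; apply: le_trans _ crho; rewrite /rho; lra.
have [pi Hpi] : exists pi : {perm 'I_K}, perm_err P Gstar G pi <= Num.max c R0 + R0.
  apply: Hguar; [done|exact: Hce|idtac|idtac].
    have HR : R0 < rho by rewrite /rho; lra.
    exact: HR.
  have HR : 2 * Num.max c R0 < m; last exact: HR.
  rewrite mc /c /rho.
  have H2 : 2 * (R0 + eps) < m * k by rewrite /d in epsd d0; lra.
  rewrite mulrA ltr_pdivrMr //; lra.
rewrite /Err_unsup; apply: le_trans (bigmin1_le _ _ _ _ _ (mem_index_enum pi)) _.
apply: le_trans Hpi _; rewrite mc /c /rho.
have : eps / k <= e by rewrite ler_pdivrMr.
have -> : (R0 + eps) / k = R0 / k + eps / k by rewrite mulrDl.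
have -> : (1 + 1 / k) * R0 = R0 + R0 / k by rewrite mulrDl mul1r mul1r mulrC.
lra.
Qed.
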